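(* A CRN protocol $\Pi=(\mathcal{S},\mathcal{R})$ is stably (resp. haltingly) correct with respect to an interface $\mathcal{I}=(\mathcal{U},\mu,\mathcal{C})$ under a weakly fair scheduler if and only if for every valid initial configuration $\mathbf{c}^0$, every strongly connected component $S$ of $D^{\Pi}_{\mathbf{c}^0}$ satisfies at least one of: (1) some reaction of $\mathcal{R}$ escapes from $S$; or (2) $S\subseteq\mathrm{stab}(Z_{\mathcal{I}}(\mathbf{c}^0))$ (resp. $S\subseteq\mathrm{halt}(Z_{\mathcal{I}}(\mathbf{c}^0))$), where $Z_{\mathcal{I}}(\mathbf{c}^0)=\{\mathbf{c}\in\mathbb{N}^{\mathcal{S}}:(\mu(\mathbf{c}^0),\mu(\mathbf{c}))\in\mathcal{C}\}$.
   Context: CRN protocol $\Pi=(\mathcal{S},\mathcal{R})$: $\mathcal{S}$ finite set of species, $\mathcal{R}\subset\mathbb{N}^{\mathcal{S}}\times\mathbb{N}^{\mathcal{S}}$ finite set of reactions $(\mathbf{r},\mathbf{p})$ with $\|\mathbf{r}\|_1\in\{1,2\}$, $\|\mathbf{r}\|_1\le\|\mathbf{p}\|_1$, every $\mathbf{r}$ with $1\le\|\mathbf{r}\|_1\le2$ is the reactant vector of at least one reaction, void reactions are those with $\mathbf{r}=\mathbf{p}$ (and a void reaction is then the only reaction with reactants $\mathbf{r}$). Configurations are $\mathbf{c}\in\mathbb{N}^{\mathcal{S}}$ with $\|\mathbf{c}\|_1\ge1$; $(\mathbf{r},\mathbf{p})$ is applicable to $\mathbf{c}$ if $\mathbf{r}\le\mathbf{c}$,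 giving $\alpha(\mathbf{c})=\mathbf{c}-\mathbf{r}+\mathbf{p}$; $\operatorname{app}(\mathbf{c})$ is the set of applicable reactions; $\mathbf{c}\stackrel{*}{\rightharpoonup}\mathbf{c}'$ means $\mathbf{c}'$ is reachable by a finite sequence of applicable reactions. The protocol respects finite density ($\mathbf{c}\stackrel{*}{\rightharpoonup}\mathbf{c}'$ implies $\|\mathbf{c}'\|_1\le O(\|\mathbf{c}\|_1)$). For $Z\subseteq\mathbb{N}^{\mathcal{S}}$: $\mathrm{stab}(Z)=\{\mathbf{c}\in Z:\mathbf{c}\stackrel{*}{\rightharpoonup}\mathbf{c}'\Rightarrow\mathbf{c}'\in Z\}$, $\mathrm{halt}(Z)=\{\mathbf{c}\in Z:\mathbf{c}\stackrel{*}{\rightharpoonup}\mathbf{c}'\Rightarrow\mathbf{c}'=\mathbf{c}\}$. The configuration digraph $D^{\Pi}$ has an $\alpha$-labeled edge $\mathbf{c}\to\alpha(\mathbf{c})$ for each $\alpha\in\operatorname{app}(\mathbf{c})$; $D^{\Pi}_{\mathbf{c}}$ is its subgraph induced on configurations reachable from $\mathbf{c}$. A reaction $\alpha$ escapes from a component $S$ if $\alpha\in\operatorname{app}(\mathbf{c})$ and $\alpha(\mathbf{c})\notin S$ for all $\mathbf{c}\in S$. An execution is $\langle\mathbf{c}^t,\alpha^t\rangle_{t\ge0}$ with $\alpha^t\in\operatorname{app}(\mathbf{c}^t)$, $\mathbf{c}^{t+1}=\alpha^t(\mathbf{c}^t)$; it is weakly fair if for every $t$ and $\alpha\in\operatorname{app}(\mathbf{c}^t)$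 there is $t'\ge t$ with $\alpha^{t'}=\alpha$ or $\alpha\notin\operatorname{app}(\mathbf{c}^{t'})$; it stabilizes (resp. halts) into $Z$ if $\mathbf{c}^t\in\mathrm{stab}(Z)$ (resp. $\mathrm{halt}(Z)$) for some $t$. An interface $\mathcal{I}=(\mathcal{U},\mu,\mathcal{C})$ consists of a set $\mathcal{U}$, a map $\mu:\mathcal{S}\to\mathcal{U}$ and a relation $\mathcal{C}\subseteq\mathbb{N}^{\mathcal{U}}\times\mathbb{N}^{\mathcal{U}}$, with $\mu(\mathbf{c})(u)=\sum_{A:\mu(A)=u}\mathbf{c}(A)$. A configuration $\mathbf{c}^0$ is a valid initial configuration if $Z_{\mathcal{I}}(\mathbf{c}^0)\neq\emptyset$. $\Pi$ is stably (resp. haltingly) correct w.r.t. $\mathcal{I}$ under a weakly fair scheduler if every weakly fair execution from a valid initial configuration $\mathbf{c}^0$ stabilizes (resp. halts) into $Z_{\mathcal{I}}(\mathbf{c}^0)$. *)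

(* Defs.v *)
From mathcomp Require Import all_boot.
Set Implicit Arguments. Unset Strict Implicit. Unset Printing Implicit Defensive.

Section CRN.
Variable S : finType.

(* vectors in N^S (configurations are those with ||c||_1 >= 1) *)
Definition config := {ffun S -> nat}.
(* a reaction (r, p): reactant vector and product vector *)
Definition reaction := (config * config)%type.

Definition norm1 (c : config) : nat := \sum_(A : S) c A.
Definition le_vec (r c : config) : bool := [forall A, r A <= c A].

Definition crn_protocol (R : seq reaction) : Prop :=
  [/\ (forall a, a \in R -> (1 <= norm1 a.1 <= 2) /\ norm1 a.1 <= norm1 a.2),
      (forall r : config, 1 <= norm1 r <= 2 -> exists p, (r, p) \in R) &
      (forall r p : config, (r, r) \in R -> (r, p) \in R -> p = r)].

Definition applicable (R : seq reaction) (a : reaction) (c : config) : bool :=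
  (a \in R) && le_vec a.1 c.
Definition apply_r (a : reaction) (c : config) : config :=
  [ffun A => c A - a.1 A + a.2 A].

Inductive reach (R : seq reaction) : config -> config -> Prop :=
| reach_refl c : reach R c c
| reach_step c a c' : applicable R a c -> reach R (apply_r a c) c' -> reach R c c'.

Definition finite_density (R : seq reaction) : Prop :=
  exists K : nat, forall c c', 1 <= norm1 c -> reach R c c' -> norm1 c' <= K * norm1 c.

Definition stab (R : seq reaction) (Z : config -> Prop) (c : config) : Prop :=
  Z c /\ forall c', reach R c c' -> Z c'.
Definition halt (R : seq reaction) (Z : config -> Prop) (c : config) : Prop :=
  Z c /\ forall c', reach R c c' -> c' = c.

Section Interface.
Variable U : eqType.
Variable mu : S -> U.
Variable Cr : (U -> nat) -> (U -> nat) -> Prop.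

Definition mu_vec (c : config) : U -> nat := fun u => \sum_(A : S | mu A == u) c A.
Definition Z_I (c0 : config) : config -> Prop := fun c => Cr (mu_vec c0) (mu_vec c).
Definition valid_init (c0 : config) : Prop := 1 <= norm1 c0 /\ exists c, Z_I c0 c.
End Interface.

(* executions <c^t, alpha^t>_t, given as e t = (c^t, alpha^t) *)
Definition execution (R : seq reaction) (e : nat -> config * reaction) : Prop :=
  forall t, applicable R (e t).2 (e t).1 /\ (e t.+1).1 = apply_r (e t).2 (e t).1.
Definition weakly_fair (R : seq reaction) (e : nat -> config * reaction) : Prop :=
  forall t a, applicable R a (e t).1 ->
    exists t', t <= t' /\ ((e t').2 = a \/ ~~ applicable R a (e t').1).

Definition correct_wrt (target : seq reaction -> (config -> Prop) -> config -> Prop)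
  (R : seq reaction) (U : eqType) (mu : S -> U) (Cr : (U -> nat) -> (U -> nat) -> Prop) : Prop :=
  forall c0, valid_init mu Cr c0 ->
  forall e, execution R e -> (e 0).1 = c0 -> weakly_fair R e ->
  exists t, target R (Z_I mu Cr c0) (e t).1.

Definition stably_correct := correct_wrt stab.
Definition haltingly_correct := correct_wrt halt.

(* Sc is a strongly connected component of D^Pi_{c0}: the mutual-reachability
   class of some configuration reachable from c0 *)
Definition is_scc (R : seq reaction) (c0 : config) (Sc : config -> Prop) : Prop :=
  exists c, reach R c0 c /\ forall x, Sc x <-> (reach R c x /\ reach R x c).

Definition escapes (R : seq reaction) (a : reaction) (Sc : config -> Prop) : Prop :=
  forall c, Sc c -> applicable R a c /\ ~ Sc (apply_r a c).

Definition scc_condition (target : seq reaction -> (config -> Prop) -> config -> Prop)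
  (R : seq reaction) (U : eqType) (mu : S -> U) (Cr : (U -> nat) -> (U -> nat) -> Prop) : Prop :=
  forall c0, valid_init mu Cr c0 ->
  forall Sc, is_scc R c0 Sc ->
    (exists a, a \in R /\ escapes R a Sc) \/
    (forall c, Sc c -> target R (Z_I mu Cr c0) c).

End CRN.

(* Main.v *)
Require Import Defs.
From mathcomp Require Import all_boot.
From Stdlib Require Import Classical.
Set Implicit Arguments. Unset Strict Implicit. Unset Printing Implicit Defensive.

Lemma reach_trans (S : finType) (R : seq (reaction S)) x y z :
  reach R x y -> reach R y z -> reach R x z.
Proof.
elim=> [c|c a c' Ha _ IH] //= Hz.
exact: (reach_step Ha (IH Hz)).
Qed.

Fixpoint walk_ok (S : finType) (R : seq (reaction S)) (x : config S) (w : seq (reaction S)) : bool :=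
  match w with [::] => true | a :: w' => applicable R a x && walk_ok R (apply_r a x) w' end.
Definition run (S : finType) (x : config S) (w : seq (reaction S)) :=
  foldl (fun c a => apply_r a c) x w.

Lemma reach_walk (S : finType) (R : seq (reaction S)) x y :
  reach R x y -> exists w, walk_ok R x w /\ run x w = y.
Proof.
elim=> [c|c a c' Ha _ [w [Hw Hr]]]; first by exists [::].
by exists (a :: w); rewrite /= Ha Hw.
Qed.

Lemma walk_reach (S : finType) (R : seq (reaction S)) w x :
  walk_ok R x w -> reach R x (run x w).
Proof.
elim: w x => [|a w IH] x /=; first by constructor.
by case/andP=> Ha Hw; apply: (reach_step Ha); apply: IH.
Qed.

Lemma run_cat (S : finType) (x : config S) w1 w2 : run x (w1 ++ w2) = run (run x w1) w2.
Proof. by rewrite /run foldl_cat. Qed.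

Lemma walk_ok_cat (S : finType) (R : seq (reaction S)) x w1 w2 :
  walk_ok R x (w1 ++ w2) = walk_ok R x w1 && walk_ok R (run x w1) w2.
Proof. by elim: w1 x => [|a w IH] x //=; rewrite IH andbA. Qed.

Lemma walk_ok_nth (S : finType) (R : seq (reaction S)) a0 w x j :
  walk_ok R x w -> j < size w -> applicable R (nth a0 w j) (run x (take j w)).
Proof.
elim: w x j => [|a w IH] x [|j] //=; first by case/andP.
by case/andP=> _ Hw Hj; apply: IH.
Qed.

Lemma run_take_nth (S : finType) a0 (x : config S) w j :
  j < size w -> run x (take j.+1 w) = apply_r (nth a0 w j) (run x (take j w)).
Proof. by move=> Hj; rewrite (take_nth a0 Hj) /run foldl_rcons. Qed.

Lemma reach_exec (S : finType) (R : seq (reaction S)) e :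
  execution R e -> forall d t, reach R (e t).1 (e (t + d)).1.
Proof.
move=> He; elim=> [|d IH] t; first by rewrite addn0; constructor.
have [Ha Hn] := He t.
apply: (reach_step Ha); rewrite -Hn addnS -addSn; exact: IH.
Qed.

Lemma reach_exec_le (S : finType) (R : seq (reaction S)) e t t' :
  execution R e -> t <= t' -> reach R (e t).1 (e t').1.
Proof. by move=> He Ht; rewrite -(subnKC Ht); apply: reach_exec. Qed.

Lemma norm_mono (S : finType) (R : seq (reaction S)) :
  crn_protocol R -> forall a x, applicable R a x -> norm1 x <= norm1 (apply_r a x).
Proof.
case=> H1 _ _ a x /andP[Ha /forallP Hle].
have [_ Hrp] := H1 a Ha.
have E : norm1 x = \sum_A (x A - a.1 A) + norm1 a.1.
  rewrite /norm1 -big_split /=; apply: eq_bigr => A _; by rewrite subnK.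
have E2 : norm1 (apply_r a x) = \sum_A (x A - a.1 A) + norm1 a.2.
  rewrite /norm1 -big_split /=; apply: eq_bigr => A _; by rewrite ffunE.
by rewrite E E2 leq_add2l.
Qed.

Lemma norm_reach (S : finType) (R : seq (reaction S)) :
  crn_protocol R -> forall x y, reach R x y -> norm1 x <= norm1 y.
Proof.
move=> Hc x y; elim=> // c a c' Ha _ IH.
exact: leq_trans (norm_mono Hc Ha) IH.
Qed.

Lemma exists_app (S : finType) (R : seq (reaction S)) :
  crn_protocol R -> forall x, 1 <= norm1 x -> exists a, applicable R a x.
Proof.
move=> Hc x Hx.
have [A HA] : exists A, 0 < x A.
  apply: NNPP => Hn; move: Hx; rewrite /norm1 big1 // => A _.
  by apply/eqP; rewrite -leqn0 leqNgt; apply/negP => H; apply: Hn; exists A.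
pose r : config S := [ffun B => (B == A) : nat].
have Hr : norm1 r = 1.
  rewrite /norm1 (bigD1 A) //= big1 ?ffunE ?eqxx // => B /negPf HB.
  by rewrite ffunE HB.
case: Hc => _ H2 _.
have [p Hp] := H2 r ltac:(by rewrite Hr).
exists (r, p); rewrite /applicable Hp /=; apply/forallP => B; rewrite ffunE.
by case: eqP => // ->.
Qed.
Definition bnd_list (S : finType) (B : nat) : seq (config S) :=
  map (fun f : {ffun S -> 'I_B.+1} => ([ffun A => nat_of_ord (f A)] : config S))
    (enum {ffun S -> 'I_B.+1}).

Lemma bnd_listP (S : finType) B (c : config S) : norm1 c <= B -> c \in bnd_list S B.
Proof.
move=> Hc; apply/mapP; exists [ffun A => (inord (c A) : 'I_B.+1)]; first by rewrite mem_enum.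
apply/ffunP => A; rewrite !ffunE inordK // ltnS (leq_trans _ Hc) //.
by rewrite /norm1 (bigD1 A) //= leq_addr.
Qed.

Lemma pigeon (T : eqType) (f : nat -> T) (l : seq T) :
  (exists x, x \in l /\ forall n, exists m, n <= m /\ f m = x) \/
  (exists N, forall m, N <= m -> f m \notin l).
Proof.
elim: l => [|x l IH]; first by right; exists 0.
case: (classic (forall n, exists m, n <= m /\ f m = x)) => Hx.
  by left; exists x; rewrite mem_head.
have [n Hn] := not_all_ex_not _ _ Hx.
case: IH => [[y [Hy Hi]]|[N HN]].
  by left; exists y; rewrite in_cons Hy orbT.
right; exists (maxn n N) => m; rewrite geq_max => /andP[H1 H2].
rewrite in_cons negb_or HN // andbT; apply/eqP => E; apply: Hn; by exists m.
Qed.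

Lemma scc_to_correct (S : finType) (R : seq (reaction S)) (U : eqType) (mu : S -> U) Cr target :
  crn_protocol R -> finite_density R ->
  scc_condition target R mu Cr -> correct_wrt target R mu Cr.
Proof.
move=> Hc [K HK] Hs c0 Hv e He He0 Hf.
have Hn0 : 1 <= norm1 c0 by case: Hv.
have Hb : forall t, (e t).1 \in bnd_list S (K * norm1 c0).
  move=> t; apply: bnd_listP; apply: HK => //; rewrite -He0.
  by apply: reach_exec_le.
case: (pigeon (fun t => (e t).1) (bnd_list S (K * norm1 c0))) => [[x [_ Hi]]|[N HN]];
  last by have := HN N (leqnn N); rewrite Hb.
have [t0 [_ Ht0]] := Hi 0.
pose Sc := fun y => reach R x y /\ reach R y x.
have HS : forall t, t0 <= t -> Sc (e t).1.
  move=> t Ht; split; first by rewrite -Ht0; apply: reach_exec_le.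
  have [m [Hm Em]] := Hi t; rewrite -Em; exact: reach_exec_le.
have Hscc : is_scc R c0 Sc.
  exists x; split => //; rewrite -He0 -Ht0; exact: reach_exec_le.
case: (Hs c0 Hv Sc Hscc) => [[a [Ha Hesc]]|Ht].
  have [Happ _] := Hesc _ (HS t0 (leqnn t0)).
  have [t' [Hle Hor]] := Hf t0 a Happ.
  have [Happ' Hout] := Hesc _ (HS t' Hle).
  case: Hor => [Ea|]; last by rewrite Happ'.
  exfalso; apply: Hout; rewrite -Ea; have [_ <-] := He t'.
  by apply: HS; apply: leqW.
by exists t0; apply: Ht; apply: HS.
Qed.
Definition cov (S : finType) (R : seq (reaction S)) a0 (c : config S) W a :=
  exists j, j <= size W /\ ((j < size W /\ nth a0 W j = a) \/ ~~ applicable R a (run c (take j W))).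

Lemma cov_catl (S : finType) (R : seq (reaction S)) a0 c W1 W2 a :
  cov R a0 c W1 a -> cov R a0 c (W1 ++ W2) a.
Proof.
move=> [j [Hj H]]; exists j; rewrite size_cat (leq_trans Hj (leq_addr _ _)); split => //.
case: H => [[Hl Hn]|Hn].
  by left; rewrite nth_cat Hl (leq_trans Hl (leq_addr _ _)) Hn.
right; rewrite take_cat; case: ltnP => // Hge.
have Ej : j = size W1 by apply/eqP; rewrite eqn_leq Hj Hge.
by move: Hn; rewrite Ej subnn take0 cats0 take_size.
Qed.

Lemma cov_catr (S : finType) (R : seq (reaction S)) a0 c W1 W2 a :
  cov R a0 (run c W1) W2 a -> cov R a0 c (W1 ++ W2) a.
Proof.
move=> [j [Hj H]]; exists (size W1 + j); rewrite size_cat leq_add2l; split => //.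
case: H => [[Hl Hn]|Hn].
  by left; rewrite nth_cat ltn_add2l Hl ltnNge leq_addr /= addKn.
by right; rewrite take_cat ltnNge leq_addr /= addKn run_cat.
Qed.

Lemma loop_cover (S : finType) (R : seq (reaction S)) a0 c (l : seq (reaction S)) :
  (forall a, a \in l -> exists w, [/\ walk_ok R c w, run c w = c & cov R a0 c w a]) ->
  exists W, [/\ walk_ok R c W, run c W = c & forall a, a \in l -> cov R a0 c W a].
Proof.
elim: l => [|b l IH] H; first by exists [::].
have [w [Hw Hr Hcv]] := H b (mem_head _ _).
have [W [HW HrW HcW]] : exists W, [/\ walk_ok R c W, run c W = c & forall a, a \in l -> cov R a0 c W a].
  by apply: IH => a Ha; apply: H; rewrite in_cons Ha orbT.
exists (w ++ W); split.
- by rewrite walk_ok_cat Hw Hr HW.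
- by rewrite run_cat Hr.
- move=> a; rewrite in_cons => /orP[/eqP ->|Ha]; first exact: cov_catl.
  by apply: cov_catr; rewrite Hr; apply: HcW.
Qed.
Lemma correct_to_scc (S : finType) (R : seq (reaction S)) (U : eqType) (mu : S -> U) Cr target :
  crn_protocol R ->
  (forall Z x y, target R Z x -> reach R x y -> target R Z y) ->
  correct_wrt target R mu Cr -> scc_condition target R mu Cr.
Proof.
move=> Hc Hcl Hcor c0 Hv Sc [c [Hc0c HSc]].
case: (classic (exists a, a \in R /\ escapes R a Sc)) => Hesc; [by left|right].
pose a0 : reaction S := (c, c).
have Hper : forall a, a \in R -> exists w, [/\ walk_ok R c w, run c w = c & cov R a0 c w a].
  move=> a Ha.
  have [y [Hy Hny]] : exists y, Sc y /\ ~ (applicable R a y /\ ~ Sc (apply_r a y)).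
    apply: NNPP => Hn; apply: Hesc; exists a; split => // y Hy; apply: NNPP => H'; apply: Hn; by exists y.
  have [Hcy Hyc] := (HSc y).1 Hy.
  have [p1 [Hp1 Er1]] := reach_walk Hcy.
  have [p2 [Hp2 Er2]] := reach_walk Hyc.
  case Happ: (applicable R a y).
    have Hs : Sc (apply_r a y) by apply: NNPP => H'; apply: Hny.
    have [_ Hb] := (HSc _).1 Hs.
    have [p3 [Hp3 Er3]] := reach_walk Hb.
    exists (p1 ++ a :: p3); split.
    - by rewrite walk_ok_cat Hp1 Er1 /= Happ Hp3.
    - by rewrite run_cat Er1 /= Er3.
    - by apply: cov_catr; rewrite Er1; exists 0; split => //; left.
  exists (p1 ++ p2); split.
  - by rewrite walk_ok_cat Hp1 Er1 Hp2.
  - by rewrite run_cat Er1 Er2.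
  - by apply: cov_catr; rewrite Er1; exists 0; split => //; right; rewrite take0 /= Happ.
have [W [HW HrW HcW]] := loop_cover Hper.
have Hnc : 1 <= norm1 c by apply: leq_trans (norm_reach Hc Hc0c); case: Hv.
have [b Hb] := exists_app Hc Hnc.
have HWpos : 0 < size W.
  have [j [Hj [[Hl _]|Hn]]] := HcW b (andP Hb).1; first exact: leq_ltn_trans Hl.
  rewrite lt0n; apply/negP => /eqP /size0nil EW; move: Hj Hn; rewrite EW leqn0 => /eqP ->.
  by rewrite /= Hb.
have [P [HP ErP]] := reach_walk Hc0c.
pose g t := if t < size P then nth a0 P t else nth a0 W ((t - size P) %% size W).
pose cf := fix cf (t : nat) : config S :=
  match t with 0 => c0 | t'.+1 => apply_r (g t') (cf t') end.
pose e t := (cf t, g t).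
have cfP : forall t, t <= size P -> cf t = run c0 (take t P).
  elim=> [|t IH] Ht; first by rewrite take0.
  by rewrite (run_take_nth a0 c0 Ht) /= IH ?(ltnW Ht) // /g Ht.
have cfW : forall n, cf (size P + n) = run c (take (n %% size W) W).
  elim=> [|n IH].
    by rewrite addn0 mod0n take0 cfP // take_size ErP.
  rewrite addnS /= IH /g ltnNge leq_addr /= addKn -(run_take_nth a0 c (ltn_pmod n HWpos)).
  rewrite -[n.+1]addn1 -modnDml addn1.
  have := ltn_pmod n HWpos; rewrite leq_eqVlt => /orP[/eqP Ej|Hlt].
    by rewrite Ej modnn take0 take_size HrW.
  by rewrite (modn_small Hlt).
have Hexec : execution R e.
  move=> t; split => //.
  rewrite /e /=; case: (ltnP t (size P)) => Ht.
    by rewrite cfP ?(ltnW Ht) // /g Ht; apply: walk_ok_nth.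
  rewrite -(subnKC Ht) cfW /g ltnNge leq_addr /= addKn; apply: walk_ok_nth => //.
  exact: ltn_pmod.
have Hfair : weakly_fair R e.
  move=> t a Happ.
  have [j [Hj Hor]] := HcW a (andP Happ).1.
  exists (size P + (t * size W + j)); split.
    apply: leq_trans (leq_addl (size P) _); apply: leq_trans (leq_addr j _).
    exact: leq_pmulr.
  rewrite /e /= cfW.
  have Hm : run c (take ((t * size W + j) %% size W) W) = run c (take j W).
    rewrite modnMDl; move: Hj; rewrite leq_eqVlt => /orP[/eqP ->|Hl].
      by rewrite modnn take0 take_size HrW.
    by rewrite modn_small.
  rewrite Hm; case: Hor => [[Hl Hn]|Hn]; [left|by right].
  by rewrite /g ltnNge leq_addr /= addKn modnMDl modn_small.
have [t Ht] := Hcor c0 Hv e Hexec erefl Hfair.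
move=> y Hy; apply: (Hcl _ _ _ Ht).
have [Hcy _] := (HSc y).1 Hy; apply: reach_trans Hcy.
have : reach R (e t).1 (e (size P + t * size W)).1.
  apply: reach_exec_le => //; apply: leq_trans (leq_addl (size P) _).
  exact: leq_pmulr.
by rewrite /e /= cfW modnMl take0.
Qed.

Theorem lemma3p2 (S : finType) (R : seq (reaction S)) (U : eqType) (mu : S -> U)
    (Cr : (U -> nat) -> (U -> nat) -> Prop) :
  crn_protocol R -> finite_density R ->
  (stably_correct R mu Cr <-> scc_condition (@stab S) R mu Cr) /\
  (haltingly_correct R mu Cr <-> scc_condition (@halt S) R mu Cr).
Proof.
move=> Hc Hd; split; split.
- apply: correct_to_scc => // Z x y [Hx Hall] Hxy; split; first exact: Hall.
  by move=> z Hz; apply: Hall; exact: reach_trans Hxy Hz.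
- exact: scc_to_correct.
- apply: correct_to_scc => // Z x y [Hx Hall] Hxy.
  by have Ey := Hall y Hxy; subst y; split.
- exact: scc_to_correct.
Qed.
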